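(* Consider the following online convex optimization setting. Let $\bm{X}\subset\mathbb{R}^n$ be a convex closed set, and for $t=1,\dots,T$ let $f_t:\bm{X}\to\mathbb{R}$ be the time-varying objective and $g_t:\bm{X}\to\mathbb{R}^m$ the time-varying constraint function, revealed only after the decision $x_t$ is made. Assume: (A1) $f_t$ and (each component of) $g_t$ are convex, and $\bm{X}$ has bounded diameter $d(\bm{X})$, i.e. $\|x-y\|\le d(\bm{X})$ for all $x,y\in\bm{X}$; (A2) there is $F>0$ with $|f_t(x)-f_t(y)|\le F$ and $\|g_t(x)\|\le F$ for all $t$ and all $x,y\in\bm{X}$; (A3) subgradients $\partial f_t(x)$, $\partial g_t(x)$ exist and there is $G>0$ with $\|\partial f_t(x)\|\le G$ and $\|\partial g_t(x)\|\le G$ for all $t$ and $x\in\bm{X}$. Let $c\in(0,1)$, $\kappa\in[0,c]$, $\alpha_0>0$, $\beta_0>0$, $\gamma_0\in(0,1/\sqrt{2G})$ be constants, and set $M=\lfloor \kappa\log_2(1+T)\rfloor+1$, $\alpha_{i,t}=\alpha_0 2^{i-1}/t^{c}$, $\beta_{i,t}=\beta_0/\sqrt{\alpha_{i,t}}$, $\gamma=\gamma_0/T^{c}$ for $i\in\{1,\dots,M\}$. Run the following algorithm (VQB-OCO). Initialization: $Q_{i,0}=0$, arbitrary $x_{i,1}\in\bm{X}$, weights $\rho_{i,1}=(M+1)/[i(i+1)M]$ for $i=1,\dots,M$, and $x_1=\sum_{i=1}^M\rho_{i,1}x_{i,1}$. For $t=2,\dots,T$ and each $i\in\{1,\dots,M\}$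 (in parallel): $Q_{i,t-1}=Q_{i,t-2}+\beta_{i,t-1}[g_{t-1}(x_{t-1})]_+$; $x_{i,t}=\arg\min_{x\in\bm{X}}\{\alpha_{i,t-1}\langle\partial f_{t-1}(x_{t-1}),x\rangle+\alpha_{i,t-1}\beta_{i,t-1}\langle Q_{i,t-1},[g_{t-1}(x)]_+\rangle+\|x-x_{i,t-1}\|^2\}$; $\ell_{i,t-1}=\langle\partial f_{t-1}(x_{t-1}),x_{i,t-1}-x_{t-1}\rangle$, $\rho_{i,t}=\dfrac{\rho_{i,t-1}e^{-\gamma\ell_{i,t-1}}}{\sum_{j=1}^M\rho_{j,t-1}e^{-\gamma\ell_{j,t-1}}}$; and the decision is $x_t=\sum_{i=1}^M\rho_{i,t}x_{i,t}$. Then the dynamic regret satisfies $$\mathrm{Reg}=\sum_{t=1}^T\bigl[f_t(x_t)-f_t(y_t)\bigr]=\mathcal{O}\bigl(T^{c}(1+P_x)^{1-\kappa}+T^{1-c}(1+P_x)^{\kappa}\bigr),$$ where $\{y_t\}_{t=1}^T\subset\bm{X}$ is the global (in-hindsight) optimal decision sequence and $P_x=\sum_{t=1}^{T-1}\|y_{t+1}-y_t\|$ is its path length.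
   Context: $[\cdot]_+$ denotes the componentwise positive part $\max\{\cdot,0\}$; $\langle\cdot,\cdot\rangle$ is the standard inner product. $Q_{i,t}\in\mathbb{R}^m$ is a ''virtual queue'' used in place of unknown dual variables; the index $i$ labels $M$ parallel ''experts'' run with different step sizes, combined by exponential weights $\rho_{i,t}$. The big-$\mathcal{O}$ hides constants depending on $\alpha_0,\beta_0,\gamma_0,G,d(\bm{X}),c,\kappa$. The comparator $y_t$ is the global optimum of the offline (hindsight) problem, and $P_x$ (path length) is the accumulated variation of these optimal decisions. *)

(* Defs.v *)
From HB Require Import structures.
From mathcomp Require Import all_boot all_order all_algebra.
From mathcomp Require Import all_classical all_reals all_analysis.
Set Implicit Arguments. Unset Strict Implicit. Unset Printing Implicit Defensive.
Import Order.TTheory GRing.Theory Num.Theory.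
Local Open Scope ring_scope.

Section Defs.
Variable R : realType.

Definition dotv (n : nat) (u v : 'rV[R]_n) : R := \sum_(k < n) u 0 k * v 0 k.
Definition enorm (n : nat) (u : 'rV[R]_n) : R := Num.sqrt (dotv u u).
(* Frobenius norm of a matrix (used for the "Jacobian" subgradient of g_t) *)
Definition frob (m n : nat) (A : 'M[R]_(m, n)) : R :=
  Num.sqrt (\sum_(i < m) \sum_(j < n) A i j ^+ 2).
Definition pospart (m : nat) (u : 'rV[R]_m) : 'rV[R]_m := map_mx (fun a => Num.max a 0) u.

Definition convex_on (n : nat) (X : set 'rV[R]_n) : Prop :=
  forall x y (l : R), X x -> X y -> 0 <= l <= 1 -> X (l *: x + (1 - l) *: y).

Definition convex_fun_on (n : nat) (X : set 'rV[R]_n) (h : 'rV[R]_n -> R) : Prop :=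
  forall x y (l : R), X x -> X y -> 0 <= l <= 1 ->
    h (l *: x + (1 - l) *: y) <= l * h x + (1 - l) * h y.

Definition is_subgrad (n : nat) (X : set 'rV[R]_n) (h : 'rV[R]_n -> R) (x s : 'rV[R]_n) : Prop :=
  forall y, X y -> h x + dotv s (y - x) <= h y.

Definition log2 (a : R) : R := ln a / ln 2.

Definition nexperts (kappa : R) (T : nat) : nat :=
  (`|Num.floor (kappa * log2 (1 + T%:R))|)%N.+1.

(* step sizes; the expert index i : 'I_M stands for i+1 in {1,...,M} *)
Definition alpha (alpha0 c : R) (M : nat) (i : 'I_M) (t : nat) : R :=
  alpha0 * 2 ^+ i / (t%:R `^ c).
Definition beta (alpha0 beta0 c : R) (M : nat) (i : 'I_M) (t : nat) : R :=
  beta0 / Num.sqrt (alpha alpha0 c i t).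
Definition gammaT (gamma0 c : R) (T : nat) : R := gamma0 / (T%:R `^ c).

Definition VQB_run (n m : nat) (c kappa alpha0 beta0 gamma0 : R) (T : nat)
  (X : set 'rV[R]_n) (f : nat -> 'rV[R]_n -> R) (g : nat -> 'rV[R]_n -> 'rV[R]_m)
  (sf : nat -> 'rV[R]_n -> 'rV[R]_n)
  (xi : 'I_(nexperts kappa T) -> nat -> 'rV[R]_n)
  (Q : 'I_(nexperts kappa T) -> nat -> 'rV[R]_m)
  (rho : 'I_(nexperts kappa T) -> nat -> R)
  (x : nat -> 'rV[R]_n) : Prop :=
  let M := nexperts kappa T in
  let al := alpha alpha0 c (M:=M) in
  let be := beta alpha0 beta0 c (M:=M) in
  let ga := gammaT gamma0 c T in
  (forall i, Q i 0%N = 0) /\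
  (forall i, X (xi i 1%N)) /\
  (forall i : 'I_M, rho i 1%N = (M%:R + 1) / ((i.+1)%:R * (i.+2)%:R * M%:R)) /\
  (forall (t : nat) (i : 'I_M), (2 <= t <= T)%N ->
     Q i t.-1 = Q i t.-2 + be i t.-1 *: pospart (g t.-1 (x t.-1))) /\
  (forall (t : nat) (i : 'I_M), (2 <= t <= T)%N ->
     let obj := fun z : 'rV[R]_n =>
       al i t.-1 * dotv (sf t.-1 (x t.-1)) z
       + al i t.-1 * be i t.-1 * dotv (Q i t.-1) (pospart (g t.-1 z))
       + enorm (z - xi i t.-1) ^+ 2 in
     X (xi i t) /\ (forall z, X z -> obj (xi i t) <= obj z)) /\
  (forall (t : nat) (i : 'I_M), (2 <= t <= T)%N ->
     let ell := fun j : 'I_M => dotv (sf t.-1 (x t.-1)) (xi j t.-1 - x t.-1) in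
     rho i t = rho i t.-1 * expR (- (ga * ell i)) /
               (\sum_(j < M) rho j t.-1 * expR (- (ga * ell j)))) /\
  (forall t : nat, (1 <= t <= T)%N -> x t = \sum_(i < M) rho i t *: xi i t).

Definition feasible_seq (n m : nat) (T : nat) (X : set 'rV[R]_n)
  (g : nat -> 'rV[R]_n -> 'rV[R]_m) (y : nat -> 'rV[R]_n) : Prop :=
  forall t, (1 <= t <= T)%N -> X (y t) /\ (forall k, g t (y t) 0 k <= 0).

Definition offline_optimal (n m : nat) (T : nat) (X : set 'rV[R]_n)
  (f : nat -> 'rV[R]_n -> R) (g : nat -> 'rV[R]_n -> 'rV[R]_m) (y : nat -> 'rV[R]_n) : Prop :=
  feasible_seq T X g y /\
  forall z, feasible_seq T X g z ->
    \sum_(1 <= t < T.+1) f t (y t) <= \sum_(1 <= t < T.+1) f t (z t).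

Definition regret (n : nat) (T : nat) (f : nat -> 'rV[R]_n -> R) (x y : nat -> 'rV[R]_n) : R :=
  \sum_(1 <= t < T.+1) (f t (x t) - f t (y t)).

Definition path_length (n : nat) (T : nat) (y : nat -> 'rV[R]_n) : R :=
  \sum_(1 <= t < T) enorm (y t.+1 - y t).

End Defs.

(* Main.v *)
Require Import Defs.
From HB Require Import structures.
From mathcomp Require Import all_boot all_order all_algebra.
From mathcomp Require Import all_classical all_reals all_analysis.
From mathcomp Require Import ring lra zify.
Import Order.TTheory GRing.Theory Num.Theory.
Import numFieldNormedType.Exports.
Set Implicit Arguments. Unset Strict Implicit. Unset Printing Implicit Defensive.
Local Open Scope ring_scope.
Section L1.
Variable R : realType.

Lemma dotvC n (u v : 'rV[R]_n) : dotv u v = dotv v u.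
Proof. by rewrite /dotv; apply: eq_bigr => k _; rewrite mulrC. Qed.

Lemma dotvDr n (u v w : 'rV[R]_n) : dotv u (v + w) = dotv u v + dotv u w.
Proof. by rewrite /dotv -big_split; apply: eq_bigr => k _; rewrite !mxE mulrDr. Qed.

Lemma dotvNr n (u v : 'rV[R]_n) : dotv u (- v) = - dotv u v.
Proof. by rewrite /dotv -sumrN; apply: eq_bigr => k _; rewrite !mxE mulrN. Qed.

Lemma dotvBr n (u v w : 'rV[R]_n) : dotv u (v - w) = dotv u v - dotv u w.
Proof. by rewrite dotvDr dotvNr. Qed.

Lemma dotvZr n (a : R) (u v : 'rV[R]_n) : dotv u (a *: v) = a * dotv u v.
Proof. by rewrite /dotv mulr_sumr; apply: eq_bigr => k _; rewrite !mxE mulrCA. Qed.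

Lemma dotvDl n (u v w : 'rV[R]_n) : dotv (v + w) u = dotv v u + dotv w u.
Proof. by rewrite dotvC dotvDr !(dotvC u). Qed.
Lemma dotvBl n (u v w : 'rV[R]_n) : dotv (v - w) u = dotv v u - dotv w u.
Proof. by rewrite dotvC dotvBr !(dotvC u). Qed.
Lemma dotvNl n (u v : 'rV[R]_n) : dotv (- v) u = - dotv v u.
Proof. by rewrite dotvC dotvNr dotvC. Qed.
Lemma dotvZl n (a : R) (u v : 'rV[R]_n) : dotv (a *: v) u = a * dotv v u.
Proof. by rewrite dotvC dotvZr dotvC. Qed.

Lemma dotv_sumr n M (s : 'rV[R]_n) (w : 'I_M -> R) (p : 'I_M -> 'rV[R]_n) :
  dotv s (\sum_(j < M) w j *: p j) = \sum_(j < M) w j * dotv s (p j).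
Proof.
rewrite /dotv; under eq_bigr => k _ do rewrite summxE mulr_sumr.
rewrite exchange_big /=; apply: eq_bigr => j _; rewrite mulr_sumr.
by apply: eq_bigr => k _; rewrite !mxE mulrCA.
Qed.

Lemma dotv_ge0 n (u : 'rV[R]_n) : 0 <= dotv u u.
Proof. by rewrite /dotv; apply: sumr_ge0 => k _; rewrite -expr2 sqr_ge0. Qed.

Lemma enorm_ge0 n (u : 'rV[R]_n) : 0 <= enorm u.
Proof. exact: sqrtr_ge0. Qed.

Lemma enorm_sq n (u : 'rV[R]_n) : enorm u ^+ 2 = dotv u u.
Proof. by rewrite /enorm sqr_sqrtr // dotv_ge0. Qed.

Lemma dotv_eq0 n (u v : 'rV[R]_n) : dotv u u = 0 -> dotv u v = 0.
Proof.
move=> H.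
have H1 : forall k, u 0 k = 0.
  move=> k; have := @psumr_eq0P R _ xpredT (fun k => u 0 k ^+ 2) (fun k _ => _) (etrans (eq_bigr _ (fun k _ => esym (expr2 (u 0 k)))) H) k isT.
  by move=> /(_ (fun k => sqr_ge0 _)) /eqP; rewrite sqrf_eq0 => /eqP.
by rewrite /dotv big1 // => k _; rewrite H1 mul0r.
Qed.

Lemma CS n (u v : 'rV[R]_n) : dotv u v <= enorm u * enorm v.
Proof.
have Hq : forall l : R, 0 <= l ^+ 2 * dotv u u - 2 * l * dotv u v + dotv v v.
  move=> l; have := dotv_ge0 (l *: u - v).
  rewrite !dotvBl !dotvBr !dotvZl !dotvZr (dotvC v u); lra.
have Au := dotv_ge0 u; have Av := dotv_ge0 v.
have Eu := enorm_sq u; have Ev := enorm_sq v.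
have Nu := enorm_ge0 u; have Nv := enorm_ge0 v.
set A := dotv u u in Hq Au Eu; set B := dotv v v in Hq Av Ev; set d := dotv u v in Hq *.
have [d0|d0] := lerP d 0; first by apply: le_trans d0 _; rewrite mulr_ge0.
have [A0|A0] := eqVneq A 0.
  by rewrite /d dotv_eq0 // in d0; rewrite ltxx in d0.
have Ap : 0 < A by rewrite lt_def A0 Au.
have := Hq (d / A).
have -> : (d / A) ^+ 2 * A - 2 * (d / A) * d + B = B - d ^+ 2 / A.
  by field; rewrite A0.
rewrite subr_ge0 ler_pdivrMr // => Hd.
rewrite -Eu -Ev in Hd.
have P0 : 0 <= enorm u * enorm v by rewrite mulr_ge0.
case: (lerP d (enorm u * enorm v)) => // h.
have : (enorm u * enorm v) * (enorm u * enorm v) < d * d.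
  by apply: (le_lt_trans (y := (enorm u * enorm v) * d)); [rewrite ler_wpM2l // ltW | rewrite ltr_pM2r].
rewrite -!expr2 exprMn; lra.
Qed.

Lemma CSabs n (u v : 'rV[R]_n) : `|dotv u v| <= enorm u * enorm v.
Proof.
have h1 := CS u v; have h2 := CS u (- v).
have e : enorm (- v) = enorm v by rewrite /enorm !dotvNr dotvC dotvNr opprK.
by rewrite dotvNr e in h2; rewrite ler_norml; apply/andP; split; lra.
Qed.

Lemma convex_sum n (X : set 'rV[R]_n) (I : eqType) (r : seq I) (w : I -> R) (p : I -> 'rV[R]_n) :
  convex_on X -> (forall i, 0 <= w i) -> (forall i, X (p i)) ->
  0 < \sum_(i <- r) w i -> X ((\sum_(i <- r) w i)^-1 *: \sum_(i <- r) w i *: p i).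
Proof.
move=> cX w0 Xp; elim: r => [|a r IH]; first by rewrite big_nil ltxx.
rewrite !big_cons => Spos.
have Sr0 : 0 <= \sum_(i <- r) w i by rewrite sumr_ge0.
have [Sr|Srp] := eqVneq (\sum_(i <- r) w i) 0.
  have Hz : forall i, i \in r -> w i = 0.
    move=> i ir; apply/eqP; move: Sr => /eqP; rewrite psumr_eq0 //.
    by move/allP => /(_ i ir) /implyP; apply.
  rewrite Sr addr0 in Spos *.
  rewrite (big1_seq _ _ (fun i => w i *: p i)); last by move=> i /andP [_ ir]; rewrite Hz // scale0r.
  by rewrite addr0 scalerA mulVf ?gt_eqF // scale1r.
have Srpos : 0 < \sum_(i <- r) w i by rewrite lt_def Srp Sr0.
have Xq := IH Srpos.
set S := \sum_(i <- r) w i in Srpos Xq Sr0 Srp Spos *.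
set q := S^-1 *: _ in Xq.
have Hv : \sum_(i <- r) w i *: p i = S *: q by rewrite /q scalerA mulfV // scale1r.
rewrite Hv.
have l01 : 0 <= w a / (w a + S) <= 1.
  apply/andP; split; first by rewrite divr_ge0 // ltW.
  by rewrite ler_pdivrMr // mul1r lerDl ltW.
have := cX (p a) q _ (Xp a) Xq l01.
congr X.
rewrite scalerDr !scalerA; congr (_ + _); first by rewrite mulrC.
congr (_ *: _); field; lra.
Qed.

End L1.
Section L2.
Variable R : realType.

Lemma prox n (X : set 'rV[R]_n) (L : 'rV[R]_n -> R) (p u z : 'rV[R]_n) :
  convex_on X ->
  (forall v w l, X v -> X w -> 0 <= l <= 1 ->
     L (l *: v + (1 - l) *: w) <= l * L v + (1 - l) * L w) ->
  X u -> (forall w, X w -> L u + enorm (u - p) ^+ 2 <= L w + enorm (w - p) ^+ 2) ->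
  X z ->
  L u + enorm (u - p) ^+ 2 + enorm (z - u) ^+ 2 <= L z + enorm (z - p) ^+ 2.
Proof.
move=> cX Lc Xu Hmin Xz.
rewrite !enorm_sq.
set N := dotv (z - u) (z - u).
set A := L z - L u + 2 * dotv (u - p) (z - u).
have key : forall l, 0 < l <= 1 -> 0 <= A + l * N.
  move=> l /andP [l0 l1].
  have l01 : 0 <= l <= 1 by rewrite ltW.
  have Xw := cX z u l Xz Xu l01.
  have H1 := Hmin _ Xw; rewrite !enorm_sq in H1.
  have H2 := Lc z u l Xz Xu l01.
  have E1 : dotv (l *: z + (1 - l) *: u - p) (l *: z + (1 - l) *: u - p) =
     dotv (u - p) (u - p) + 2 * l * dotv (u - p) (z - u) + l ^+ 2 * N.
    rewrite /N !(dotvDl, dotvBl, dotvZl, dotvDr, dotvBr, dotvZr, dotvNl, dotvNr).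
    rewrite ?(dotvC u z) ?(dotvC p z) ?(dotvC p u); ring.
  rewrite E1 in H1.
  have : 0 <= l * (A + l * N) by rewrite /A; nra.
  by rewrite pmulr_rge0.
have A0 : 0 <= A.
  case: (lerP 0 A) => // An.
  have N0 : 0 <= N by apply: dotv_ge0.
  have lp : 0 < - A / (N + 1 - A) by rewrite divr_gt0 //; lra.
  have l1 : - A / (N + 1 - A) <= 1 by rewrite ler_pdivrMr; lra.
  have := key (- A / (N + 1 - A)); rewrite lp l1 => /(_ isT).
  have -> : A + - A / (N + 1 - A) * N = (- A / (N + 1 - A)) * (A - 1).
    by field; lra.
  rewrite pmulr_rge0 //; lra.
have E2 : dotv (z - p) (z - p) = N + 2 * dotv (u - p) (z - u) + dotv (u - p) (u - p).
  rewrite /N !(dotvDl, dotvBl, dotvZl, dotvDr, dotvBr, dotvZr, dotvNl, dotvNr).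
  rewrite ?(dotvC u z) ?(dotvC p z) ?(dotvC p u); ring.
rewrite E2; move: A0; rewrite /A; lra.
Qed.

Lemma expR_quad (y b : R) : `|y| <= b -> expR y <= 1 + y + y ^+ 2 * expR (3 * b).
Proof.
move=> Hy.
have EF := expRxMexpNx_1 y.
have h1 := expR_ge1Dx y; have h2 := expR_ge1Dx (- y).
have Ep := expR_gt0 y; have Fp := expR_gt0 (- y).
set E := expR y in EF h1 Ep *; set F := expR (- y) in EF h2 Fp *.
have S : E - 1 - y <= (E - 1) ^+ 2 * F.
  have -> : (E - 1) ^+ 2 * F = E * (E * F) - 2 * (E * F) + F by ring.
  rewrite EF; lra.
have b0 : 0 <= b by apply: le_trans Hy.
have [y0|y0] := lerP 0 y.
  have Hle : E - 1 <= y * E by nra.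
  have e0 : 0 <= E - 1 by lra.
  have S2 : (E - 1) ^+ 2 * F <= y ^+ 2 * E.
    have : (E - 1) ^+ 2 <= (y * E) ^+ 2 by rewrite ler_sqr ?nnegrE //; nra.
    rewrite exprMn => h.
    have -> : y ^+ 2 * E = y ^+ 2 * E ^+ 2 * F by rewrite expr2 -!mulrA EF mulr1.
    by rewrite ler_wpM2r // ltW.
  have : E <= expR (3 * b) by rewrite ler_expR; move: Hy; rewrite ger0_norm //; lra.
  move=> h; have : y ^+ 2 * E <= y ^+ 2 * expR (3 * b) by rewrite ler_wpM2l // sqr_ge0.
  lra.
have Hle : 1 - E <= - y by lra.
have e0 : 0 <= 1 - E.
  have : E <= 1 by rewrite /E expR_le1 ltW.
  lra.
have S2 : (E - 1) ^+ 2 <= y ^+ 2.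
  rewrite -sqrrN opprB -[y ^+ 2]sqrrN ler_sqr ?nnegrE //; lra.
have S3 : (E - 1) ^+ 2 * F <= y ^+ 2 * F by rewrite ler_wpM2r // ltW.
have : F <= expR (3 * b) by rewrite ler_expR; move: Hy; rewrite ltr0_norm //; lra.
move=> h; have : y ^+ 2 * F <= y ^+ 2 * expR (3 * b) by rewrite ler_wpM2l // sqr_ge0.
lra.
Qed.

Lemma sum_powR_inv (c : R) n : 0 < c < 1 ->
  \sum_(1 <= t < n.+1) (t%:R `^ c)^-1 <= n%:R `^ (1 - c) / (1 - c).
Proof.
move=> /andP [c0 c1].
elim: n => [|n IH].
  by rewrite big_geq // divr_ge0 ?powR_ge0 // subr_ge0 ltW.
rewrite big_nat_recr //=.
set a := n%:R `^ (1 - c); set b := (n.+1)%:R `^ c.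
have n0 : (0 : R) <= n%:R by [].
have n10 : (0 : R) < n.+1%:R by rewrite ltr0n.
have bp : 0 < b by rewrite powR_gt0.
have Y : a * b <= n%:R * (1 - c) + n.+1%:R * c.
  have := @conjugate_powR R a b ((1 - c)^-1) (c^-1) (powR_ge0 _ _) (powR_ge0 _ _).
  rewrite !invr_gt0 subr_gt0 c1 c0 !invrK => /(_ isT isT).
  have -> : (1 - c) + c = 1 by ring.
  move=> /(_ erefl).
  by rewrite /a /b -!powRrM mulfV ?gt_eqF ?subr_gt0 // mulfV ?gt_eqF // !powRr1 // ltW.
have E : n.+1%:R `^ (1 - c) = n.+1%:R / b.
  by rewrite powRB ?powRr1 ?ltW //; apply/implyP => _; rewrite gt_eqF.
rewrite E.
apply: (le_trans (lerD IH (lexx _))).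
rewrite -/a -/b.
have cp : 0 < 1 - c by rewrite subr_gt0.
set q := b^-1.
have qp : 0 < q by rewrite invr_gt0.
have Ha : a <= (n%:R + c) * q.
  have -> : a = a * b * q by rewrite /q mulfK ?gt_eqF.
  rewrite ler_pM2r //; move: Y; rewrite -natr1; lra.
have -> : n.+1%:R / b = (n%:R + 1) * q by rewrite -natr1.
rewrite -subr_ge0.
have -> : (n%:R + 1) * q / (1 - c) - (a / (1 - c) + q) = ((n%:R + c) * q - a) / (1 - c).
  by field; rewrite gt_eqF.
by rewrite divr_ge0 ?subr_ge0 // ltW.
Qed.

Lemma abel (A r : nat -> R) (D2 : R) (n : nat) :
  (forall t, (1 <= t <= n.+1)%N -> 0 <= A t <= D2) -> 0 <= r 0%N ->
  (forall t, (t < n)%N -> r t <= r t.+1) ->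
  \sum_(1 <= t < n.+1) (A t - A t.+1) * r t <= D2 * r n - A n.+1 * r n.
Proof.
elim: n => [|n IH] HA r0 Hr.
  rewrite big_geq //; have /andP [a0 a1] := HA 1%N isT; nra.
rewrite big_nat_recr //=.
have IH' := IH (fun t ht => HA t ltac:(lia)) r0 (fun t ht => Hr t ltac:(lia)).
have /andP [a0 a1] := HA n.+1 ltac:(lia).
have /andP [b0 b1] := HA n.+2 ltac:(lia).
have rn := Hr n (ltnSn n).
have rge : forall k, (k <= n)%N -> 0 <= r k.
  elim => [//|k IHk] hk; apply: le_trans (IHk ltac:(lia)) (Hr k ltac:(lia)).
have := rge n (leqnn n); nra.
Qed.

Lemma select_i (v : R) k : 1 <= v ->
  exists i, (i <= k)%N /\ 2 ^+ i <= v /\ (i = k \/ v < 2 ^+ i.+1).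
Proof.
move=> v1; elim: k => [|k [i [ik [iv H]]]].
  by exists 0%N; split => //; split; [rewrite expr0 | left].
case: H => [ek|lt].
  subst i; case: (lerP (2 ^+ k.+1) v) => h.
    by exists k.+1; split => //; split => //; left.
  by exists k; split => //; split => //; right.
by exists i; split; [apply: leq_trans ik _|split => //; right].
Qed.

Lemma tel_sum k : \sum_(i < k) ((i.+1)%:R * (i.+2)%:R)^-1 = k%:R / (k.+1)%:R :> R.
Proof.
elim: k => [|k IH]; first by rewrite big_ord0 mul0r.
rewrite big_ord_recr /= IH.
have k0 : (0:R) <= k%:R by [].
rewrite -!natr1; field.
by apply/andP; split; apply/eqP; lra.
Qed.

Lemma rho1_sum M : (0 < M)%N ->
  \sum_(i < M) ((M%:R + 1) / ((i.+1)%:R * (i.+2)%:R * M%:R)) = 1 :> R.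
Proof.
move=> M0.
have Mp : (0 : R) < M%:R by rewrite ltr0n.
rewrite (eq_bigr (fun i : 'I_M => (M%:R + 1) / M%:R * ((i.+1)%:R * (i.+2)%:R)^-1)); last first.
  move=> i _; rewrite invfM; ring.
rewrite -mulr_sumr tel_sum -natr1; field.
by apply/andP; split; apply/eqP; lra.
Qed.

Lemma bound4 i : ((i.+1) * (i.+2) <= 4 ^ i.+1)%N.
Proof.
elim: i => [//|i IH].
rewrite expnS.
apply: leq_trans (leq_mul (leqnn 4) IH).
nia.
Qed.

End L2.
Section L3.
Variable R : realType.

Lemma enormB n (u v : 'rV[R]_n) : enorm (u - v) = enorm (v - u).
Proof. by rewrite -opprB /enorm dotvNl dotvNr opprK. Qed.

Lemma mono_chain (r : nat -> R) T : (forall t, (t < T)%N -> r t <= r t.+1) ->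
  forall t, (t <= T)%N -> r t <= r T.
Proof.
elim: T => [|T IH] Hr t ht.
  by have -> : t = 0%N by lia.
have [->//|h] := eqVneq t T.+1.
apply: le_trans (IH (fun k hk => Hr k ltac:(lia)) t ltac:(lia)) (Hr T ltac:(lia)).
Qed.

Lemma expert_bound n (T : nat) (X : set 'rV[R]_n) (D G : R) (s xe y : nat -> 'rV[R]_n)
  (r : nat -> R) :
  (1 <= T)%N -> (forall u v, X u -> X v -> enorm (u - v) <= D) -> 0 <= D -> 0 <= G ->
  (forall t, (1 <= t <= T)%N -> X (xe t) /\ X (y t)) ->
  (forall t, (1 <= t <= T)%N -> enorm (s t) <= G) ->
  0 <= r 0%N -> (forall t, (t < T)%N -> r t <= r t.+1) -> (forall t, (1 <= t)%N -> 0 < r t) ->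
  (forall t, (1 <= t < T)%N -> (r t)^-1 * dotv (s t) (xe t.+1 - y t) <=
      enorm (y t - xe t) ^+ 2 - enorm (y t - xe t.+1) ^+ 2 - enorm (xe t.+1 - xe t) ^+ 2) ->
  \sum_(1 <= t < T.+1) dotv (s t) (xe t - y t) <=
    D ^+ 2 * r T + 2 * D * r T * path_length T y
    + G ^+ 2 / 4 * \sum_(1 <= t < T) (r t)^-1 + G * D.
Proof.
move=> T1 HD D0 G0 HX Hs r0 Hr rpos Hstep.
have rT := mono_chain Hr.
have rge0 : forall t, 0 <= r t by case=> [//|t]; apply: ltW; apply: rpos.
rewrite big_nat_recr //=.
have Hlast : dotv (s T) (xe T - y T) <= G * D.
  have [XT YT] := HX T ltac:(lia).
  apply: le_trans (CS _ _) _.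
  apply: ler_pM; rewrite ?enorm_ge0 //; first by apply Hs; lia.
  by apply HD.
set A := fun t => enorm (y t - xe t) ^+ 2.
have perT : forall t, (1 <= t < T)%N ->
  dotv (s t) (xe t - y t) <= (A t - A t.+1) * r t + 2 * D * (r T * enorm (y t.+1 - y t))
     + G ^+ 2 / 4 * (r t)^-1.
  move=> t ht.
  have [Xx Xy] := HX t ltac:(lia).
  have [Xx' Xy'] := HX t.+1 ltac:(lia).
  have rp := rpos t ltac:(lia).
  have H1 := Hstep t ht.
  have Hsg := Hs t ltac:(lia).
  set a := (r t)^-1 in H1 *.
  have ap : 0 < a by rewrite invr_gt0.
  have ra : r t * a = 1 by rewrite mulfV // gt_eqF.
  clearbody a.
  have E1 : dotv (s t) (xe t - y t) = dotv (s t) (xe t.+1 - y t) + dotv (s t) (xe t - xe t.+1).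
    by rewrite -dotvDr; congr (dotv _ _); rewrite [RHS]addrC addrA subrK.
  have H1' : dotv (s t) (xe t.+1 - y t) <= r t * (enorm (y t - xe t) ^+ 2
       - enorm (y t - xe t.+1) ^+ 2 - enorm (xe t.+1 - xe t) ^+ 2).
    have -> : dotv (s t) (xe t.+1 - y t) = r t * (a * dotv (s t) (xe t.+1 - y t)) by rewrite mulrA ra mul1r.
    by rewrite ler_wpM2l // ltW.
  set e := enorm (xe t.+1 - xe t) in H1'.
  have e0 : 0 <= e := enorm_ge0 _.
  have H2 : dotv (s t) (xe t - xe t.+1) <= G * e.
    apply: le_trans (CS _ _) _; rewrite enormB.
    by apply: ler_wpM2r.
  have H3 : G * e <= a * G ^+ 2 / 4 + r t * e ^+ 2.
    have : 0 <= r t * (a * G / 2 - e) ^+ 2 by rewrite mulr_ge0 ?sqr_ge0 // ltW.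
    have -> : r t * (a * G / 2 - e) ^+ 2 = (r t * a) * a * G ^+ 2 / 4 - (r t * a) * G * e + r t * e ^+ 2 by field.
    rewrite ra; lra.
  have H4 : A t.+1 - enorm (y t - xe t.+1) ^+ 2 <= 2 * D * enorm (y t.+1 - y t).
    rewrite /A !enorm_sq.
    set p := y t.+1 - xe t.+1; set q := y t - xe t.+1.
    have Epq : p - q = y t.+1 - y t by rewrite /p /q opprB addrA subrK.
    have Hp : enorm p <= D by apply HD.
    have Hq : enorm q <= D by apply HD.
    clearbody p q.
    have -> : dotv p p - dotv q q = dotv (p - q) p + dotv (p - q) q.
      rewrite !(dotvBl, dotvBr) ?(dotvC q p); ring.
    rewrite Epq.
    have C1 := CS (y t.+1 - y t) p; have C2 := CS (y t.+1 - y t) q.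
    have n0 := enorm_ge0 (y t.+1 - y t).
    have : enorm (y t.+1 - y t) * enorm p <= enorm (y t.+1 - y t) * D by apply: ler_wpM2l.
    have : enorm (y t.+1 - y t) * enorm q <= enorm (y t.+1 - y t) * D by apply: ler_wpM2l.
    lra.
  have rtT : r t <= r T by apply: rT; lia.
  have H5 : r t * enorm (y t.+1 - y t) <= r T * enorm (y t.+1 - y t).
    by apply: ler_wpM2r; rewrite ?enorm_ge0.
  have H6 : r t * (A t.+1 - enorm (y t - xe t.+1) ^+ 2) <= r t * (2 * D * enorm (y t.+1 - y t)).
    by rewrite ler_wpM2l // ltW.
  rewrite E1.
  have E2 : a * G ^+ 2 / 4 = G ^+ 2 / 4 * a by ring.
  rewrite /A in H6 *; rewrite -/e.
  nra.
have Hsum := ler_sum_nat perT.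
rewrite big_split /= big_split /= -!mulr_sumr in Hsum.
have Hab : \sum_(1 <= t < T) (A t - A t.+1) * r t <= D ^+ 2 * r T.
  have := @abel R A r (D ^+ 2) T.-1.
  rewrite prednK //.
  move=> /(_ _ r0 (fun t ht => Hr t ltac:(lia))) h.
  have HA : forall t, (1 <= t <= T)%N -> 0 <= A t <= D ^+ 2.
    move=> t ht; have [Xx Xy] := HX t ht.
    rewrite /A sqr_ge0 /= ler_sqr ?nnegrE ?enorm_ge0 //; by apply HD.
  apply: le_trans (h HA) _.
  have /andP [a0 _] := HA T ltac:(lia).
  have r1 := rT T.-1 ltac:(lia).
  have r2 := rge0 T.-1.
  have : 0 <= A T * r T.-1 by rewrite mulr_ge0.
  have : D ^+ 2 * r T.-1 <= D ^+ 2 * r T by rewrite ler_wpM2l // sqr_ge0.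
  lra.
rewrite /path_length.
rewrite /A in Hab.
lra.
Qed.

End L3.
Section L4.
Variable R : realType.

Lemma hedge (M T : nat) (rho : 'I_M -> nat -> R) (ell : nat -> 'I_M -> R) (ga B0 b : R) (i : 'I_M) :
  0 < ga -> 0 <= B0 -> ga * B0 <= b ->
  (forall t, (1 <= t <= T)%N -> (forall j, 0 < rho j t) /\ \sum_j rho j t = 1) ->
  (forall t j, (1 <= t < T)%N -> `|ell t j| <= B0) ->
  (forall t, (1 <= t < T)%N -> \sum_j rho j t * ell t j = 0) ->
  (forall t j, (1 <= t < T)%N -> rho j t.+1 = rho j t * expR (- (ga * ell t j)) /
        \sum_(k < M) rho k t * expR (- (ga * ell t k))) ->
  forall t, (1 <= t <= T)%N ->
   rho i 1%N * expR (- (ga * \sum_(1 <= s < t) ell s i)) <=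
   rho i t * expR (t.-1%:R * (B0 ^+ 2 * expR (3 * b) * ga ^+ 2)).
Proof.
move=> ga0 B00 gb Hrho Hell Hz Hup.
set K := B0 ^+ 2 * expR (3 * b) * ga ^+ 2.
have HZ : forall t, (1 <= t < T)%N ->
    \sum_(k < M) rho k t * expR (- (ga * ell t k)) <= expR K.
  move=> t ht.
  have [rp rs] := Hrho t ltac:(lia).
  apply: le_trans (expR_ge1Dx K).
  have step : forall k, rho k t * expR (- (ga * ell t k)) <=
      rho k t + ga * (- (rho k t * ell t k)) + rho k t * K.
    move=> k.
    have hy : `|- (ga * ell t k)| <= b.
      rewrite normrN normrM gtr0_norm //; apply: le_trans gb.
      by rewrite ler_pM2l // Hell.
    have := expR_quad hy.
    have hsq : (- (ga * ell t k)) ^+ 2 <= ga ^+ 2 * B0 ^+ 2.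
      rewrite sqrrN exprMn ler_wpM2l ?sqr_ge0 //.
      have hn := normr_ge0 (ell t k); have hb := Hell t k ht.
      have hE : ell t k ^+ 2 = `|ell t k| ^+ 2 by rewrite -normrX ger0_norm ?sqr_ge0.
      rewrite hE; nra.
    have e0 := expR_ge0 (3 * b).
    have : (- (ga * ell t k)) ^+ 2 * expR (3 * b) <= ga ^+ 2 * B0 ^+ 2 * expR (3 * b).
      by rewrite ler_wpM2r.
    have r0 := rp k.
    move=> h1 h2.
    have : rho k t * expR (- (ga * ell t k)) <= rho k t * (1 + - (ga * ell t k) + ga ^+ 2 * B0 ^+ 2 * expR (3 * b)).
      apply: ler_wpM2l; [exact: ltW | lra].
    have -> : rho k t * (1 + - (ga * ell t k) + ga ^+ 2 * B0 ^+ 2 * expR (3 * b)) =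
        rho k t + ga * (- (rho k t * ell t k)) + rho k t * K by rewrite /K; ring.
    by [].
  apply: le_trans (ler_sum _ (fun k _ => step k)) _.
  rewrite big_split /= big_split /= -mulr_sumr -mulr_suml sumrN Hz // rs; lra.
elim=> [//|t IH] ht.
case: (posnP t) => [->|tp].
  by rewrite big_geq // mulr0 oppr0 expR0 /= mul0r expR0.
have IH' := IH ltac:(lia).
rewrite big_nat_recr //= mulrDr opprD expRD mulrA.
have [rp rs] := Hrho t ltac:(lia).
have hup := Hup t i ltac:(lia).
have Zp : 0 < \sum_(k < M) rho k t * expR (- (ga * ell t k)).
  have M0 : (0 < M)%N by case: M i {rho ell Hrho Hell Hz Hup HZ rp rs hup IH IH'} => // [[]].
  rewrite (bigD1 i) //=.
  have p0 : 0 < rho i t * expR (- (ga * ell t i)) by rewrite mulr_gt0 ?expR_gt0.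
  have s0 : 0 <= \sum_(k < M | k != i) rho k t * expR (- (ga * ell t k)).
    by apply: sumr_ge0 => k _; rewrite mulr_ge0 ?expR_ge0 // ltW.
  lra.
have HZt := HZ t ltac:(lia).
set Z := \sum_(k < M) _ in Zp HZt hup.
set E := expR (- (ga * ell t i)) in hup *.
have E0 : 0 < E by apply: expR_gt0.
have h1 : rho i t * E <= rho i t.+1 * expR K.
  rewrite hup -[X in X <= _]mulr1 -!mulrA.
  apply: ler_wpM2l; first exact: ltW (rp i).
  apply: ler_wpM2l; first exact: ltW E0.
  have Zn : Z != 0 by rewrite gt_eqF.
  rewrite -(mulVf Zn); apply: ler_wpM2l => //.
  by rewrite invr_ge0 ltW.
have -> : t.+1.-1%:R * K = K + t.-1%:R * K.
  by rewrite /= -[in LHS](prednK tp) -natr1; ring.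
rewrite expRD.
apply: le_trans (ler_wpM2r (ltW E0) IH') _.
rewrite mulrAC.
have e1 := expR_gt0 (t.-1%:R * K).
rewrite mulrA; apply: ler_wpM2r; [exact: ltW e1 | exact: h1].
Qed.

End L4.
Section L5.
Variable R : realType.

Lemma powR_ge1 (a x : R) : 1 <= a -> 0 <= x -> 1 <= a `^ x.
Proof.
move=> a1 x0.
have := @ge0_ler_powR R x x0 1 a; rewrite powR1 => -> //; rewrite nnegrE //.
by apply: le_trans a1.
Qed.

Lemma exp2E (k : nat) : (2 : R) ^+ k = expR (k%:R * ln 2).
Proof. by rewrite expRM_natl lnK // posrE. Qed.

Lemma floor_fact (kappa : R) T : 0 <= kappa ->
  (1 + T%:R) `^ kappa < 2 ^+ (nexperts kappa T).
Proof.
move=> k0.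
rewrite /nexperts /log2.
set z := kappa * (ln (1 + T%:R) / ln 2).
have l2 : 0 < ln (2 : R) by apply: ln_gt0; lra.
have T0 : (1 : R) <= 1 + T%:R by rewrite lerDl.
have z0 : 0 <= z by apply: mulr_ge0 => //; apply: divr_ge0; [exact: ln_ge0 | exact: ltW].
have fz : 0 <= Num.floor z by rewrite floor_ge0.
have Hk : z < (`|Num.floor z|%N)%:R + 1.
  by rewrite natr_absz ger0_norm // -intrD1 floorD1_gt.
rewrite exp2E /powR gt_eqF; last by lra.
rewrite ltr_expR -natr1.
have -> : kappa * ln (1 + T%:R) = z * ln 2 by rewrite /z; field; rewrite gt_eqF.
by rewrite ltr_pM2r.
Qed.

Lemma Lconv_lemma n m (X : set 'rV[R]_n) (gt : 'rV[R]_n -> 'rV[R]_m) (s : 'rV[R]_n)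
   (q : 'rV[R]_m) (al ab : R) :
  0 <= al -> 0 <= ab -> (forall k, 0 <= q 0 k) ->
  (forall k, convex_fun_on X (fun u => gt u 0 k)) ->
  forall v w l, X v -> X w -> 0 <= l <= 1 ->
   al * dotv s (l *: v + (1 - l) *: w) + ab * dotv q (pospart (gt (l *: v + (1 - l) *: w)))
   <= l * (al * dotv s v + ab * dotv q (pospart (gt v)))
      + (1 - l) * (al * dotv s w + ab * dotv q (pospart (gt w))).
Proof.
move=> al0 ab0 q0 cg v w l Xv Xw /andP [l0 l1].
have HQ : dotv q (pospart (gt (l *: v + (1 - l) *: w))) <=
    l * dotv q (pospart (gt v)) + (1 - l) * dotv q (pospart (gt w)).
  rewrite /dotv !mulr_sumr -big_split /=; apply: ler_sum => k _.
  rewrite /pospart !mxE.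
  have := cg k v w l Xv Xw (introT andP (conj l0 l1)) => /= hk.
  set a := gt v 0 k; set b := gt w 0 k; set d := gt _ 0 k in hk *.
  have qk := q0 k.
  have : Num.max d 0 <= l * Num.max a 0 + (1 - l) * Num.max b 0.
    rewrite ge_max; apply/andP; split.
      apply: le_trans hk _; apply: lerD; apply: ler_wpM2l; rewrite ?le_max ?lexx //; lra.
    by apply: addr_ge0; apply: mulr_ge0; rewrite ?le_max ?lexx ?orbT //; lra.
  move=> h; have := ler_wpM2l qk h; move=> h2.
  apply: (le_trans h2); rewrite le_eqVlt; apply/orP; left; apply/eqP; ring.
rewrite dotvDr !dotvZr.
have := ler_wpM2l ab0 HQ.
move=> h.
apply: (le_trans (lerD (lexx _) h)); rewrite le_eqVlt; apply/orP; left; apply/eqP; ring.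
Qed.

End L5.
Section L6.
Variable R : realType.

Lemma hedge_final (rho1 rhoT z W : R) (k : nat) :
  0 <= rhoT <= 1 -> 1 <= rho1 * 2 ^+ k -> rho1 * expR z <= rhoT * expR W ->
  z <= W + k%:R * ln 2.
Proof.
move=> /andP [t0 t1] h1 h2.
rewrite -ler_expR expRD mulrC -exp2E.
have e0 := expR_gt0 z; have e1 := expR_gt0 W.
have k0 : (0:R) <= 2 ^+ k by apply: exprn_ge0.
have A : expR z <= rho1 * 2 ^+ k * expR z by rewrite ler_peMl // ltW.
have B : rho1 * 2 ^+ k * expR z = 2 ^+ k * (rho1 * expR z) by ring.
have C : 2 ^+ k * (rho1 * expR z) <= 2 ^+ k * (rhoT * expR W) by apply: ler_wpM2l.
have D : 2 ^+ k * (rhoT * expR W) <= 2 ^+ k * expR W.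
  apply: ler_wpM2l => //; rewrite ler_piMl // ltW.
lra.
Qed.

Lemma rho1_lb (M i : nat) : (0 < M)%N ->
  1 <= (M%:R + 1) / (i.+1%:R * i.+2%:R * M%:R) * 2 ^+ (2 * i.+1) :> R.
Proof.
move=> M0.
have H4 : (i.+1%:R * i.+2%:R : R) <= 2 ^+ (2 * i.+1).
  rewrite -natrM -natrX ler_nat expnM; exact: bound4.
have Mp : (0 : R) < M%:R by rewrite ltr0n.
have ip : (0 : R) < i.+1%:R * i.+2%:R by rewrite mulr_gt0 ?ltr0n.
set N := i.+1%:R * i.+2%:R in H4 ip *.
set E := 2 ^+ (2 * i.+1) in H4 *.
have -> : (M%:R + 1) / (N * M%:R) * E = (M%:R + 1) / M%:R * (E / N).
  by field; apply/andP; split; rewrite gt_eqF.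
have h1 : 1 <= (M%:R + 1) / M%:R :> R by rewrite ler_pdivlMr // mul1r lerDl.
have h2 : 1 <= E / N by rewrite ler_pdivlMr // mul1r.
nra.
Qed.

Lemma final_comb (c kappa alpha0 gamma0 G D : R)
  (U V v p1 P Tn Tm1 a2 iR kR L ga rT SA ES MS lT Rg : R) :
  0 < c < 1 -> 0 <= kappa < 1 -> 0 < alpha0 -> 0 < gamma0 -> 0 < G -> 0 <= D ->
  1 <= U -> 1 <= V -> 1 <= v -> 1 <= p1 -> 0 <= P -> 0 < a2 -> 0 <= iR ->
  U * V = Tn -> Tm1 <= Tn -> 0 <= Tm1 ->
  1 + P = v * p1 -> v <= 2 * (1 + D) * a2 -> a2 <= v ->
  iR * ln 2 <= kappa * L -> (1 - kappa) * L <= p1 -> kR = 2 * (iR + 1) ->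
  ga = gamma0 / U -> rT = U / (alpha0 * a2) ->
  SA <= alpha0 * a2 * (V / (1 - c)) ->
  Rg <= ES - (MS + lT) ->
  ES <= D ^+ 2 * rT + 2 * D * rT * P + G ^+ 2 / 4 * SA + G * D ->
  - lT <= G * D ->
  - (ga * MS) <= Tm1 * ((G * D) ^+ 2 * expR (3 * (gamma0 * (G * D))) * ga ^+ 2) + kR * ln 2 ->
  Rg <= ((D ^+ 2 + 2 * D) * (2 * (1 + D)) / alpha0
         + (2 * ln 2 + 2 * (kappa / (1 - kappa))) / gamma0
         + G ^+ 2 * alpha0 / (4 * (1 - c)) + 2 * (G * D)
         + (G * D) ^+ 2 * expR (3 * (gamma0 * (G * D))) * gamma0 + 1) * (U * p1 + V * v).
Proof.
move=> /andP [c0 c1] /andP [k0 k1] a0 g0 G0 D0 U1 V1 v1 p11 P0 a20 iR0 UV TmT Tm0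
  Pvp vK av HiL HL HkR Hga HrT HSA Hreg HES HlT HMS.
set Kh := (G * D) ^+ 2 * expR (3 * (gamma0 * (G * D))).
have Kh0 : 0 <= Kh by rewrite mulr_ge0 ?sqr_ge0 ?expR_ge0.
have l2 : 0 < ln (2 : R) by apply: ln_gt0; lra.
have Up : 0 < U by lra.
have gap : 0 < ga by rewrite Hga divr_gt0.
have Ta : D ^+ 2 * rT + 2 * D * rT * P <= (D ^+ 2 + 2 * D) * (2 * (1 + D)) / alpha0 * (U * p1).
  have e1 : D ^+ 2 * rT + 2 * D * rT * P = (D ^+ 2 + 2 * D * P) * U / (alpha0 * a2).
    by rewrite HrT; field; apply/andP; split; rewrite gt_eqF.
  have e2 : D ^+ 2 + 2 * D * P <= (D ^+ 2 + 2 * D) * (1 + P).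
    have : 0 <= D ^+ 2 * P by rewrite mulr_ge0 ?sqr_ge0.
    have : 0 <= 2 * D by lra.
    nra.
  have e3 : 1 + P <= 2 * (1 + D) * a2 * p1.
    rewrite Pvp; apply: ler_wpM2r; lra.
  have DD : 0 <= D ^+ 2 + 2 * D by rewrite addr_ge0 ?sqr_ge0 //; lra.
  have e4 : D ^+ 2 + 2 * D * P <= (D ^+ 2 + 2 * D) * (2 * (1 + D) * a2 * p1).
    apply: le_trans e2 _; exact: ler_wpM2l.
  rewrite e1.
  have -> : (D ^+ 2 + 2 * D) * (2 * (1 + D)) / alpha0 * (U * p1) =
     ((D ^+ 2 + 2 * D) * (2 * (1 + D) * a2 * p1)) * U / (alpha0 * a2).
    by field; apply/andP; split; rewrite gt_eqF.
  apply: ler_wpM2r; first by rewrite invr_ge0 mulr_ge0 ?ltW.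
  by apply: ler_wpM2r; [lra | exact: e4].
have Tb : G ^+ 2 / 4 * SA <= G ^+ 2 * alpha0 / (4 * (1 - c)) * (V * v).
  have cp : 0 < 1 - c by lra.
  have e1 : G ^+ 2 / 4 * SA <= G ^+ 2 / 4 * (alpha0 * a2 * (V / (1 - c))).
    by apply: ler_wpM2l => //; rewrite divr_ge0 ?sqr_ge0.
  apply: le_trans e1 _.
  have -> : G ^+ 2 / 4 * (alpha0 * a2 * (V / (1 - c))) = G ^+ 2 * alpha0 / (4 * (1 - c)) * (V * a2).
    by field; rewrite gt_eqF.
  apply: ler_wpM2l.
    by rewrite divr_ge0 ?mulr_ge0 ?sqr_ge0 ?ltW //; lra.
  apply: ler_wpM2l; [lra | exact: av].
have MSb : - MS <= Tm1 * Kh * ga + kR * ln 2 / ga.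
  have : - (ga * MS) / ga <= (Tm1 * (Kh * ga ^+ 2) + kR * ln 2) / ga.
    by apply: ler_wpM2r; [rewrite invr_ge0 ltW | exact: HMS].
  have -> : - (ga * MS) / ga = - MS by field; rewrite gt_eqF.
  have -> : (Tm1 * (Kh * ga ^+ 2) + kR * ln 2) / ga = Tm1 * Kh * ga + kR * ln 2 / ga.
    by field; rewrite gt_eqF.
  by [].
have Td1 : Tm1 * Kh * ga <= Kh * gamma0 * (V * v).
  have e1 : Tm1 * Kh * ga <= Tn * Kh * ga.
    apply: ler_wpM2r; first exact: ltW.
    by apply: ler_wpM2r.
  apply: le_trans e1 _.
  have -> : Tn * Kh * ga = Kh * gamma0 * V by rewrite Hga -UV; field; rewrite gt_eqF.
  apply: ler_wpM2l; first by apply: mulr_ge0 => //; exact: ltW.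
  rewrite ler_peMr //; lra.
have Td2 : kR * ln 2 / ga <= (2 * ln 2 + 2 * (kappa / (1 - kappa))) / gamma0 * (U * p1).
  have kp : 0 < 1 - kappa by lra.
  have e1 : kappa * L <= kappa / (1 - kappa) * p1.
    have h : kappa * ((1 - kappa) * L) <= kappa * p1 by apply: ler_wpM2l.
    rewrite -(ler_pM2r kp).
    have -> : kappa / (1 - kappa) * p1 * (1 - kappa) = kappa * p1 by field; rewrite gt_eqF.
    have -> : kappa * L * (1 - kappa) = kappa * ((1 - kappa) * L) by ring.
    exact: h.
  have kk : 0 <= kappa / (1 - kappa) by rewrite divr_ge0 // ltW.
  have e2 : kR * ln 2 <= (2 * ln 2 + 2 * (kappa / (1 - kappa))) * p1.
    rewrite HkR.
    have : 2 * ln 2 <= 2 * ln 2 * p1 by rewrite ler_peMr //; lra.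
    set q := kappa / (1 - kappa) in e1 kk *.
    have -> : 2 * (iR + 1) * ln 2 = 2 * ln 2 + 2 * (iR * ln 2) by ring.
    have -> : (2 * ln 2 + 2 * q) * p1 = 2 * ln 2 * p1 + 2 * (q * p1) by ring.
    lra.
  rewrite Hga.
  have -> : kR * ln 2 / (gamma0 / U) = (kR * ln 2) * U / gamma0.
    by field; apply/andP; split; rewrite gt_eqF.
  have -> : (2 * ln 2 + 2 * (kappa / (1 - kappa))) / gamma0 * (U * p1) =
     ((2 * ln 2 + 2 * (kappa / (1 - kappa))) * p1) * U / gamma0.
    by field; do ?[apply/andP; split]; rewrite gt_eqF //; lra.
  apply: ler_wpM2r; first by rewrite invr_ge0 ltW.
  by apply: ler_wpM2r; [lra | exact: e2].
have X1 : 0 <= U * p1 by rewrite mulr_ge0 //; lra.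
have X2 : 1 <= V * v by rewrite -[1]mulr1; apply: ler_pM; lra.
set C1 := (D ^+ 2 + 2 * D) * (2 * (1 + D)) / alpha0 in Ta *.
set C5 := (2 * ln 2 + 2 * (kappa / (1 - kappa))) / gamma0 in Td2 *.
set C2 := G ^+ 2 * alpha0 / (4 * (1 - c)) in Tb *.
set C4 := Kh * gamma0 in Td1 *.
have C10 : 0 <= C1.
  rewrite /C1; apply: divr_ge0; last exact: ltW.
  apply: mulr_ge0; last lra; apply: addr_ge0; [exact: sqr_ge0 | lra].
have C50 : 0 <= C5.
  have : 0 <= kappa / (1 - kappa) by rewrite divr_ge0 // subr_ge0 ltW.
  move=> h; rewrite /C5; apply: divr_ge0; [lra | exact: ltW].
have C20 : 0 <= C2.
  rewrite /C2; apply: divr_ge0; first by apply: mulr_ge0; [exact: sqr_ge0 | exact: ltW].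
  apply: mulr_ge0; lra.
have C40 : 0 <= C4 by rewrite /C4 mulr_ge0 // ltW.
have GD0 : 0 <= G * D by rewrite mulr_ge0 // ltW.
clearbody C1 C5 C2 C4.
have h1 : 0 <= C1 * (V * v) by rewrite mulr_ge0 //; lra.
have h2 : 0 <= C5 * (V * v) by rewrite mulr_ge0 //; lra.
have h3 : 0 <= C2 * (U * p1) by rewrite mulr_ge0.
have h4 : 0 <= C4 * (U * p1) by rewrite mulr_ge0.
have h5 : 0 <= 2 * (G * D) * (U * p1) by rewrite mulr_ge0 //; lra.
have h6 : 2 * (G * D) <= 2 * (G * D) * (V * v) by rewrite ler_peMr //; lra.
have h7 : C4 * gamma0 * 0 = 0 by ring.
clearbody Kh.
nra.
Qed.

End L6.
Unset Implicit Arguments.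
Theorem theorem1 (R : realType) (c kappa alpha0 beta0 gamma0 G F D : R) :
  0 < c < 1 -> 0 <= kappa <= c -> 0 < alpha0 -> 0 < beta0 ->
  0 < gamma0 < 1 / Num.sqrt (2 * G) -> 0 < G -> 0 < F -> 0 <= D ->
  exists C : R, 0 < C /\
  forall (n m T : nat) (X : set 'rV[R]_n)
    (f : nat -> 'rV[R]_n -> R) (g : nat -> 'rV[R]_n -> 'rV[R]_m)
    (sf : nat -> 'rV[R]_n -> 'rV[R]_n)
    (xi : 'I_(nexperts kappa T) -> nat -> 'rV[R]_n)
    (Q : 'I_(nexperts kappa T) -> nat -> 'rV[R]_m)
    (rho : 'I_(nexperts kappa T) -> nat -> R)
    (x y : nat -> 'rV[R]_n),
  (1 <= T)%N ->
  (* X convex, closed, with diameter at most D *)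
  convex_on X -> closed X ->
  (forall u v, X u -> X v -> enorm (u - v) <= D) ->
  (* (A1) convexity *)
  (forall t, (1 <= t <= T)%N -> convex_fun_on X (f t)) ->
  (forall t k, (1 <= t <= T)%N -> convex_fun_on X (fun u => g t u 0 k)) ->
  (* (A2) boundedness *)
  (forall t u v, (1 <= t <= T)%N -> X u -> X v -> `|f t u - f t v| <= F) ->
  (forall t u, (1 <= t <= T)%N -> X u -> enorm (g t u) <= F) ->
  (* (A3) bounded subgradients; sf is the subgradient of f used by the algorithm *)
  (forall t u, (1 <= t <= T)%N -> X u -> is_subgrad X (f t) u (sf t u) /\ enorm (sf t u) <= G) ->
  (forall t u, (1 <= t <= T)%N -> X u -> exists S : 'M[R]_(m, n),
      (forall k, is_subgrad X (fun v => g t v 0 k) u (row k S)) /\ frob S <= G) ->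
  (* the algorithm VQB-OCO *)
  @VQB_run R n m c kappa alpha0 beta0 gamma0 T X f g sf xi Q rho x ->
  (* the comparator: global optimal decision sequence in hindsight *)
  offline_optimal T X f g y ->
  regret T f x y <=
    C * (T%:R `^ c * (1 + path_length T y) `^ (1 - kappa)
         + T%:R `^ (1 - c) * (1 + path_length T y) `^ kappa).
Proof.
move=> /andP [c0 c1] /andP [k0 kc] a0 b0 /andP [g0 _] G0 F0 D0.
have k1 : kappa < 1 by apply: le_lt_trans kc c1.
have l2 : 0 < ln (2 : R) by apply: ln_gt0; lra.
set B0 := G * D.
set bb := gamma0 * B0.
set Kh := B0 ^+ 2 * expR (3 * bb).
set K1 := 2 * (1 + D).
set C1 := (D ^+ 2 + 2 * D) * K1 / alpha0.
set C5 := (2 * ln 2 + 2 * (kappa / (1 - kappa))) / gamma0.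
set C2 := G ^+ 2 * alpha0 / (4 * (1 - c)).
set C3 := 2 * B0.
set C4 := Kh * gamma0.
have B00 : 0 <= B0 by rewrite mulr_ge0 // ltW.
have Kh0 : 0 <= Kh by rewrite mulr_ge0 ?sqr_ge0 ?expR_ge0.
have K10 : 0 <= K1 by rewrite /K1; lra.
have C10 : 0 <= C1.
  apply: divr_ge0; last exact: ltW.
  apply: mulr_ge0 => //; apply: addr_ge0; [exact: sqr_ge0 | lra].
have C50 : 0 <= C5.
  have : 0 <= kappa / (1 - kappa) by rewrite divr_ge0 // subr_ge0 ltW.
  move=> h; apply: divr_ge0; [lra | exact: ltW].
have C20 : 0 <= C2.
  apply: divr_ge0; first by apply: mulr_ge0; [exact: sqr_ge0 | exact: ltW].
  apply: mulr_ge0; lra.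
have C30 : 0 <= C3 by rewrite /C3; lra.
have C40 : 0 <= C4 by rewrite /C4 mulr_ge0 // ltW.
exists (C1 + C5 + C2 + C3 + C4 + 1); split; first lra.
move=> n m T X f g sf xi Q rho x y T1 cX _ HD Hfc Hgc _ _ Hsf _ Hrun [Hfeas _].
case: Hrun => HQ0 [HX1 [Hrho1 [HQ [Harg [Hrho Hx]]]]].
set M := nexperts kappa T in xi Q rho HQ0 HX1 Hrho1 HQ Harg Hrho Hx *.
have M0 : (0 < M)%N by [].
have HXi : forall t i, (1 <= t <= T)%N -> X (xi i t).
  move=> t i ht; have [->|t1] := eqVneq t 1%N; first exact: HX1.
  have h2 : (1 < t <= T)%N by rewrite ltn_neqAle eq_sym t1 /=; case/andP: ht => -> ->.
  by have [] := Harg t i h2.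
have Hrf : forall t, (1 <= t <= T)%N -> (forall j, 0 < rho j t) /\ \sum_j rho j t = 1.
  elim=> [//|t IH] ht.
  have [->|tp] := posnP t.
    split; last by rewrite (eq_bigr _ (fun j _ => Hrho1 j)) rho1_sum.
    move=> j; rewrite Hrho1; apply: divr_gt0; first by rewrite ltr_wpDl ?ler0n.
    by rewrite !mulr_gt0 ?ltr0n.
  have [rp rs] := IH ltac:(clear -ht tp; lia).
  have Zp : 0 < \sum_(j < M) rho j t * expR (- (gammaT gamma0 c T * dotv (sf t (x t)) (xi j t - x t))).
    rewrite (bigD1 (Ordinal M0)) //=.
    have p0 : 0 < rho (Ordinal M0) t * expR (- (gammaT gamma0 c T * dotv (sf t (x t)) (xi (Ordinal M0) t - x t))).
      by rewrite mulr_gt0 ?expR_gt0.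
    have s0 : 0 <= \sum_(k < M | k != Ordinal M0) rho k t * expR (- (gammaT gamma0 c T * dotv (sf t (x t)) (xi k t - x t))).
      by apply: sumr_ge0 => k _; rewrite mulr_ge0 ?expR_ge0 // ltW.
    lra.
  split.
    move=> j; rewrite (Hrho t.+1 j ltac:(clear -ht tp; lia)) /=.
    by rewrite divr_gt0 // mulr_gt0 ?expR_gt0.
  rewrite (eq_bigr _ (fun j _ => Hrho t.+1 j ltac:(clear -ht tp; lia))) /= -mulr_suml.
  by rewrite mulfV // gt_eqF.
have HXx : forall t, (1 <= t <= T)%N -> X (x t).
  move=> t ht; rewrite Hx //.
  have [rp rs] := Hrf t ht.
  have := @convex_sum R n X _ (index_enum 'I_M) (fun j => rho j t) (fun j => xi j t) cX
     (fun j => ltW (rp j)) (fun j => HXi t j ht).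
  by rewrite rs invr1 scale1r; apply; lra.
have Qnn : forall s, (s < T)%N -> forall i k, 0 <= Q i s 0 k.
  elim=> [|s IH] hs i k; first by rewrite HQ0 (_ : 0 = const_mx 0) // mxE.
  have := HQ s.+2 i ltac:(clear -hs; lia); rewrite /= => ->.
  rewrite !mxE; apply: addr_ge0; first by apply: IH; clear -hs; lia.
  apply: mulr_ge0; first by rewrite /beta divr_ge0 ?sqrtr_ge0 // ltW.
  by rewrite ?mxE le_max lexx orbT.
have Xy : forall t, (1 <= t <= T)%N -> X (y t) by move=> t ht; case: (Hfeas t ht).
set P := path_length T y.
have P0 : 0 <= P by rewrite /P /path_length; apply: sumr_ge0 => t _; apply: enorm_ge0.
have PT : P <= D * T%:R.
  rewrite /P /path_length.
  have h : forall t, (1 <= t < T)%N -> enorm (y t.+1 - y t) <= D.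
    move=> t ht; apply: HD; apply: Xy; clear -ht; lia.
  apply: le_trans (ler_sum_nat h) _.
  rewrite sumr_const_nat -[X in X <= _]mulr_natr; apply: ler_wpM2l => //; rewrite ler_nat; clear; lia.
have T0 : (1 : R) <= T%:R by rewrite ler1n.
have P1 : 1 + P <= (1 + T%:R) * (1 + D).
  have -> : (1 + T%:R) * (1 + D) = 1 + T%:R + D + D * T%:R by ring.
  lra.
set v := (1 + P) `^ kappa; set p1 := (1 + P) `^ (1 - kappa).
have v1 : 1 <= v by apply: powR_ge1; lra.
have p11 : 1 <= p1 by apply: powR_ge1; lra.
have Pvp : 1 + P = v * p1.
  rewrite /v /p1 -powRD; last by apply/implyP => _; rewrite gt_eqF //; lra.
  have -> : kappa + (1 - kappa) = 1 by ring.
  by rewrite powRr1 //; lra.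
have [i [ik [iv ialt]]] := select_i `|Num.floor (kappa * log2 (1 + T%:R))|%N v1.
have iM : (i < M)%N by rewrite /M /nexperts ltnS.
set io : 'I_M := Ordinal iM.
have vK : v <= K1 * 2 ^+ i.
  case: ialt => [ei|lt]; last first.
    have e0 : (0:R) <= 2 ^+ i by apply: exprn_ge0.
    apply: le_trans (ltW lt) _; rewrite exprS /K1; nra.
  have Hf := floor_fact T k0.
  have E1 : v <= ((1 + T%:R) * (1 + D)) `^ kappa.
    have hP1 : 0 <= 1 + P by apply: addr_ge0.
    have h1 : 1 + P \in Num.nneg by rewrite nnegrE.
    have hTD : 0 <= (1 + T%:R) * (1 + D) by apply: mulr_ge0; apply: addr_ge0.
    have h2 : (1 + T%:R) * (1 + D) \in Num.nneg by rewrite nnegrE.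
    exact: (@ge0_ler_powR R kappa k0 _ _ h1 h2 P1).
  have hT0 : (0:R) <= 1 + T%:R := addr_ge0 ler01 (ler0n _ T).
  have hD0 : 0 <= 1 + D := addr_ge0 ler01 D0.
  rewrite (powRM _ hT0 hD0) in E1.
  have E2 : (1 + D) `^ kappa <= 1 + D by apply: ler1_powR; [rewrite lerDl | exact: ltW].
  have E3 : 2 ^+ M = 2 * 2 ^+ i :> R by rewrite /M /nexperts ei exprS.
  rewrite E3 in Hf.
  have q0 := powR_ge0 (1 + T%:R) kappa.
  have F1 : (1 + T%:R) `^ kappa * (1 + D) `^ kappa <= (1 + T%:R) `^ kappa * (1 + D).
    by apply: ler_wpM2l.
  have F2 : (1 + T%:R) `^ kappa * (1 + D) <= 2 * 2 ^+ i * (1 + D).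
    by apply: ler_wpM2r; [exact: hD0 | exact: ltW].
  have -> : K1 * 2 ^+ i = 2 * 2 ^+ i * (1 + D) by rewrite /K1; ring.
  exact: le_trans E1 (le_trans F1 F2).
pose r := fun t : nat => t%:R `^ c / (alpha0 * 2 ^+ i).
have a2p : (0:R) < 2 ^+ i by apply: exprn_gt0.
have A0 : 0 < alpha0 * 2 ^+ i by apply: mulr_gt0.
have Hstep : forall t, (1 <= t < T)%N -> (r t)^-1 * dotv (sf t (x t)) (xi io t.+1 - y t) <=
      enorm (y t - xi io t) ^+ 2 - enorm (y t - xi io t.+1) ^+ 2 - enorm (xi io t.+1 - xi io t) ^+ 2.
  move=> t ht.
  have ht2 : (1 < t.+1 <= T)%N by clear -ht; lia.
  have ht1 : (1 <= t <= T)%N by clear -ht; lia.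
  have htT : (t < T)%N by clear -ht; lia.
  have [Xu Hmin] := Harg t.+1 io ht2.
  have Xyt := Xy t ht1.
  have al0 : 0 <= alpha alpha0 c io t.
    by rewrite /alpha; apply: divr_ge0; [exact: ltW | exact: powR_ge0].
  have be0 : 0 <= beta alpha0 beta0 c io t.
    by rewrite /beta; apply: divr_ge0; [exact: ltW | exact: sqrtr_ge0].
  have LC := @Lconv_lemma R n m X (g t) (sf t (x t)) (Q io t) _ _ al0 (mulr_ge0 al0 be0)
     (fun k => Qnn t htT io k) (fun k => Hgc t k ht1).
  have Hp := @prox R n X (fun z => alpha alpha0 c io t * dotv (sf t (x t)) z +
      alpha alpha0 c io t * beta alpha0 beta0 c io t * dotv (Q io t) (pospart (g t z)))
      (xi io t) (xi io t.+1) (y t) cX LC Xu Hmin Xyt.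
  have Qy : dotv (Q io t) (pospart (g t (y t))) = 0.
    rewrite /dotv big1 // => k _; rewrite /pospart mxE max_r ?mulr0 //.
    exact: (Hfeas t ht1).2 k.
  have Qu : 0 <= dotv (Q io t) (pospart (g t (xi io t.+1))).
    rewrite /dotv; apply: sumr_ge0 => k _; rewrite /pospart mxE.
    by apply: mulr_ge0; [exact: Qnn | rewrite le_max lexx orbT].
  simpl in Hp; rewrite Qy mulr0 addr0 in Hp.
  have ra : (r t)^-1 = alpha alpha0 c io t by rewrite /r invf_div.
  rewrite ra dotvBr mulrBr.
  have Hab := mulr_ge0 (mulr_ge0 al0 be0) Qu.
  clear -Hp Hab; lra.
have Hr : forall t, (t < T)%N -> r t <= r t.+1.
  move=> t _; rewrite /r; apply: ler_wpM2r; first by rewrite invr_ge0 ltW.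
  apply: ge0_ler_powR; [exact: ltW | by rewrite nnegrE | by rewrite nnegrE | by rewrite ler_nat].
have rpos : forall t, (1 <= t)%N -> 0 < r t.
  by move=> t ht; rewrite /r divr_gt0 // powR_gt0 // ltr0n.
have r00 : 0 <= r 0%N by rewrite /r divr_ge0 ?powR_ge0 // ltW.
have EB := @expert_bound R n T X D G (fun t => sf t (x t)) (fun t => xi io t) y r T1 HD D0 (ltW G0)
   (fun t ht => conj (HXi t io ht) (Xy t ht)) (fun t ht => (Hsf t (x t) ht (HXx t ht)).2)
   r00 Hr rpos Hstep.
pose ell := fun (t : nat) (j : 'I_M) => dotv (sf t (x t)) (xi j t - x t).
set ga := gammaT gamma0 c T.
set U := T%:R `^ c.
have U1 : 1 <= U by apply: powR_ge1; [exact: T0 | exact: ltW].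
have ga0 : 0 < ga by rewrite /ga /gammaT divr_gt0 // powR_gt0 // ltr0n.
have gale : ga <= gamma0.
  rewrite /ga /gammaT -/U ler_pdivrMr; last by apply: lt_le_trans U1; exact: ltr01.
  by rewrite ler_peMr // ltW.
have gaB : ga * B0 <= bb by rewrite /bb; apply: ler_wpM2r.
have Hell : forall t j, (1 <= t < T)%N -> `|ell t j| <= B0.
  move=> t j ht.
  have ht1 : (1 <= t <= T)%N by clear -ht; lia.
  apply: le_trans (CSabs _ _) _; rewrite /B0.
  apply: ler_pM; rewrite ?enorm_ge0 //; first exact: (Hsf t (x t) ht1 (HXx t ht1)).2.
  by apply: HD; [exact: HXi | exact: HXx].
have Hz : forall t, (1 <= t < T)%N -> \sum_j rho j t * ell t j = 0.
  move=> t ht.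
  have ht1 : (1 <= t <= T)%N by clear -ht; lia.
  rewrite /ell (eq_bigr (fun j => rho j t * dotv (sf t (x t)) (xi j t) - rho j t * dotv (sf t (x t)) (x t))); last first.
    by move=> j _; rewrite dotvBr mulrBr.
  rewrite sumrB -mulr_suml (Hrf t ht1).2 mul1r.
  rewrite -(dotv_sumr (sf t (x t)) (fun j => rho j t) (fun j => xi j t)) -Hx //.
  by rewrite subrr.
have Hup : forall t j, (1 <= t < T)%N -> rho j t.+1 = rho j t * expR (- (ga * ell t j)) /
        \sum_(k < M) rho k t * expR (- (ga * ell t k)).
  move=> t j ht.
  have ht2 : (1 < t.+1 <= T)%N by clear -ht; lia.
  exact: (Hrho t.+1 j ht2).
have TT : (1 <= T <= T)%N by rewrite T1 leqnn.
have HG := @hedge R M T rho ell ga B0 bb io ga0 B00 gaB Hrf Hell Hz Hup T TT.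
have rT1 : 0 <= rho io T <= 1.
  have [rp rs] := Hrf T TT.
  rewrite ltW //=; rewrite -rs (bigD1 io) //= lerDl.
  by apply: sumr_ge0 => k _; apply: ltW.
have rl : 1 <= rho io 1%N * 2 ^+ (2 * i.+1) by rewrite Hrho1; exact: rho1_lb.
have HMS := hedge_final rT1 rl HG.
set MS := \sum_(1 <= s < T) ell s io in HMS.
set lT := ell T io.
set ES := \sum_(1 <= t < T.+1) dotv (sf t (x t)) (xi io t - y t) in EB.
have Hreg : regret T f x y <= ES - (MS + lT).
  have -> : MS + lT = \sum_(1 <= t < T.+1) ell t io by rewrite /MS /lT big_nat_recr.
  rewrite /ES -sumrB /regret; apply: ler_sum_nat => t ht.
  have ht1 : (1 <= t <= T)%N by clear -ht; lia.
  have [sg _] := Hsf t (x t) ht1 (HXx t ht1).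
  have h := sg (y t) (Xy t ht1).
  rewrite /ell !dotvBr; rewrite dotvBr in h.
  clear -h; lra.
have HlT : - lT <= G * D.
  have h := CSabs (sf T (x T)) (xi io T - x T).
  have h1 : enorm (sf T (x T)) <= G := (Hsf T (x T) TT (HXx T TT)).2.
  have h2 : enorm (xi io T - x T) <= D by apply: HD; [exact: HXi | exact: HXx].
  have h3 : enorm (sf T (x T)) * enorm (xi io T - x T) <= G * D by apply: ler_pM; rewrite ?enorm_ge0.
  have h4 := ler_normr (ell T io).
  rewrite /lT; move: h h3; rewrite /ell => h h3.
  have := ler_norm (- dotv (sf T (x T)) (xi io T - x T)); rewrite normrN => h5.
  clear -h h3 h5; lra.
set V := T%:R `^ (1 - c).
have V1 : 1 <= V by apply: powR_ge1; [exact: T0 | rewrite subr_ge0 ltW].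
have UV : U * V = T%:R.
  rewrite /U /V -powRD; last by apply/implyP => _; rewrite gt_eqF // ltr0n.
  by rewrite (_ : c + (1 - c) = 1) ?powRr1 //; ring.
have TmT : T.-1%:R <= T%:R :> R by rewrite ler_nat leq_pred.
have Tm0 : 0 <= T.-1%:R :> R by [].
have HiL : i%:R * ln 2 <= kappa * ln (1 + P).
  have pa : (2:R) ^+ i \in Num.pos by rewrite posrE.
  have pv : v \in Num.pos by rewrite posrE; apply: lt_le_trans v1; exact: ltr01.
  have h : ln (2 ^+ i) <= ln v by rewrite ler_ln.
  have t2 : (0:R) < 2 by rewrite ltr0n.
  rewrite (@lnXn R i 2 t2) in h.
  rewrite -(mulr_natl (ln 2) i) in h.
  rewrite /v ln_powR in h.
  exact: h.
have HL : (1 - kappa) * ln (1 + P) <= p1.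
  have h : ln p1 <= p1 - 1.
    have := @le_ln1Dx R (p1 - 1) ltac:(clear -p11; lra).
    by rewrite (_ : 1 + (p1 - 1) = p1) //; ring.
  rewrite /p1 ln_powR in h.
  clear -h; rewrite /p1 in h *; lra.
have HkR : (2 * i.+1)%:R = 2 * (i%:R + 1) :> R.
  by rewrite natrM; congr (_ * _); rewrite natr1.
have Hga : ga = gamma0 / U by [].
have HrT : r T = U / (alpha0 * 2 ^+ i) by [].
have HSA : \sum_(1 <= t < T) (r t)^-1 <= alpha0 * 2 ^+ i * (V / (1 - c)).
  rewrite (eq_bigr (fun t => alpha0 * 2 ^+ i * (t%:R `^ c)^-1)); last first.
    by move=> t _; rewrite /r invf_div.
  rewrite -mulr_sumr; apply: ler_wpM2l; first exact: ltW.
  apply: le_trans (sum_powR_inv T (introT andP (conj c0 c1))).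
  rewrite [X in _ <= X]big_nat_recr //= lerDl invr_ge0; exact: powR_ge0.
have iR0 : (0:R) <= i%:R by [].
exact: (@final_comb R c kappa alpha0 gamma0 G D U V v p1 P T%:R T.-1%:R (2 ^+ i) i%:R
   (2 * i.+1)%:R (ln (1 + P)) ga (r T) (\sum_(1 <= t < T) (r t)^-1) ES MS lT (regret T f x y)
   (introT andP (conj c0 c1)) (introT andP (conj k0 k1)) a0 g0 G0 D0 U1 V1 v1 p11 P0 a2p iR0
   UV TmT Tm0 Pvp vK iv HiL HL HkR Hga HrT HSA Hreg EB HlT HMS).
Qed.
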